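(* Let $s\ge1$, let $q$ be a prime power and let $C^{(1)},\ldots,C^{(s)}\in\mathbb{F}_q^{\mathbb{N}\times\mathbb{N}_0}$ be finite-row generating matrices. Let $\mathbf{T}:\mathbb{N}_0\to\mathbb{N}_0$ with $\mathbf{T}(m)\le m$. If $C^{(1)},\ldots,C^{(s)}$ generate a $(\mathbf{T},s)$-sequence in base $q$ via Algorithm 1 (for some admissible choice of the bijections), then, for every choice of bijections $\psi_r$, $\lambda_{i,j}$, Algorithm 2 based on these matrices and the input sequence $(s_n)_{n\ge0}=(-n-1)_{n\ge0}$ (viewed in $\mathbb{Z}_q$) produces a $(\mathbf{T},s)$-sequence in base $q$.
   Context: $\mathbb{F}_q$ is the finite field with $q$ elements, $D_q=\{0,\ldots,q-1\}$; $\mathbb{Z}_q$ is the ring of $q$-adic integers, each $z\in\mathbb{Z}_q$ having a unique representation $z=\sum_{r\ge0}a_rq^r$, $a_r\in D_q$ (e.g. $-1=\sum_r(q-1)q^r$). A matrix $(c^{(i)}_{j,r})_{j\ge1,r\ge0}$ is finite-row if each row has finitely many nonzero entries. Algorithm 2: choose bijections $\psi_r:D_q\to\mathbb{F}_q$ ($r\ge0$), finite-row matrices $C^{(i)}=(c^{(i)}_{j,r})$, bijections $\lambda_{i,j}:\mathbb{F}_q\to D_q$ ($1\le i\le s$, $j\ge1$) and $(s_n)$ in $\mathbb{Z}_q$; with $s_n=\sum_ra_rq^r$ put $x_n^{(i)}=\sum_{j\ge1}\lambda_{i,j}(\sum_rc^{(i)}_{j,r}\psi_r(a_r))q^{-j}$,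 $\boldsymbol{x}_n=(x_n^{(1)},\ldots,x_n^{(s)})\in[0,1]^s$. Algorithm 1 is the same with $s_n=n$ and $\psi_r(0)=0$ for all large $r$. The $m$-digit truncation $[x_n^{(i)}]_{q,m}=\sum_{j=1}^m\lambda_{i,j}(\cdots)q^{-j}$ (truncation of this digit expansion), applied coordinatewise. Elementary interval in base $q$: $\prod_{i=1}^s[a_iq^{-d_i},(a_i+1)q^{-d_i})$, $d_i\ge0$, $0\le a_i<q^{d_i}$. For $0\le t\le m$, a $(t,m,s)$-net in base $q$ is a set of $q^m$ points in $[0,1)^s$ with exactly $q^t$ points in every elementary interval of volume $q^{t-m}$. A sequence $(\boldsymbol{x}_n)$ is a $(\mathbf{T},s)$-sequence in base $q$ if for all $k\ge0$ and $m$ with $\mathbf{T}(m)<m$ the points $[\boldsymbol{x}_n]_{q,m}$, $kq^m\le n<(k+1)q^m$, form a $(\mathbf{T}(m),m,s)$-net in base $q$. For Algorithm 1 over $\mathbb{F}_q$, producing a $(\mathbf{T},s)$-sequence is equivalent to: for every $m$ with $m>\mathbf{T}(m)$ and all integers $d_1,\ldots,d_s\ge0$ with $1\le d_1+\cdots+d_s\le m-\mathbf{T}(m)$, the vectors $(c^{(i)}_{j,0},\ldots,c^{(i)}_{j,m-1})\in\mathbb{F}_q^m$, $1\le j\le d_i$, $1\le i\le s$, are linearly independent. *)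

(* Defs.v *)
From mathcomp Require Import all_boot all_order all_algebra.
Set Implicit Arguments. Unset Strict Implicit. Unset Printing Implicit Defensive.
Import Order.TTheory GRing.Theory Num.Theory.
Local Open Scope ring_scope.

(* r-th digit (r >= 0) of the q-adic expansion of an integer z, viewed in Z_q:
   z = sum_r a_r q^r with a_r in {0,..,q-1}; a_r = floor((z mod q^(r+1)) / q^r). *)
Definition qdigit (q : nat) (z : int) (r : nat) : nat :=
  `|((z %% (q ^ r.+1)%N%:Z)%Z %/ (q ^ r)%N%:Z)%Z|%N.

(* psi : D_q -> F is a bijection (values outside D_q = {0..q-1} are irrelevant) *)
Definition bij_DF (F : finFieldType) (psi : nat -> F) : Prop :=
  (forall a b, (a < #|F|)%N -> (b < #|F|)%N -> psi a = psi b -> a = b) /\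
  (forall y : F, exists2 a, (a < #|F|)%N & psi a = y).

Definition bij_FD (F : finFieldType) (lam : F -> nat) : Prop :=
  (forall y, (lam y < #|F|)%N) /\ injective lam /\
  (forall a, (a < #|F|)%N -> exists y, lam y = a).

(* Finite-row generating matrices: C i j is the finite list of (possibly)
   nonzero entries of row j (rows j >= 1; row 0 is unused) of C^(i+1);
   entry c^{(i+1)}_{j,r} = (C i j)`_r, which is 0 for r >= size (C i j). *)
Definition gen_mats (F : finFieldType) (s : nat) := 'I_s -> nat -> seq F.

(* j-th digit (in F_q, before lambda) of x_n^(i), for the input z = s_n in Z_q *)
Definition alg_digit (F : finFieldType) s (C : gen_mats F s) (psi : nat -> nat -> F)
  (z : int) (i : 'I_s) (j : nat) : F :=
  \sum_(r < size (C i j)) (C i j)`_r * psi r (qdigit #|F| z r).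

Definition alg_point_trunc (F : finFieldType) s (C : gen_mats F s)
  (psi : nat -> nat -> F) (lam : 'I_s -> nat -> F -> nat)
  (seqn : nat -> int) (m n : nat) (i : 'I_s) : rat :=
  \sum_(1 <= j < m.+1)
     (lam i j (alg_digit C psi (seqn n) i j))%:R / (#|F| ^ j)%:R.

Definition is_net (q m t s : nat) (P : 'I_(q ^ m) -> 'I_s -> rat) : Prop :=
  (t <= m)%N /\
  (forall n i, 0 <= P n i < 1) /\
  (forall d a : 'I_s -> nat,
     (\sum_(i < s) d i)%N = (m - t)%N ->
     (forall i, (a i < q ^ d i)%N) ->
     #|[set n : 'I_(q ^ m) | [forall i : 'I_s,
          ((a i)%:R / (q ^ d i)%:R <= P n i) &&
          (P n i < (a i).+1%:R / (q ^ d i)%:R)]]| = (q ^ t)%N).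

Arguments is_net : clear implicits.

(* (T,s)-sequence in base q, given the m-digit truncations X m n i of x_n^(i) *)
Definition is_Tseq (q s : nat) (T : nat -> nat) (X : nat -> nat -> 'I_s -> rat) : Prop :=
  forall k m : nat, (T m < m)%N ->
    is_net q m (T m) s (fun (n : 'I_(q ^ m)) i => X m (k * q ^ m + n)%N i).

Arguments is_Tseq : clear implicits.

Definition admissible2 (F : finFieldType) s (psi : nat -> nat -> F)
  (lam : 'I_s -> nat -> F -> nat) : Prop :=
  (forall r, bij_DF (psi r)) /\ (forall i j, (1 <= j)%N -> bij_FD (lam i j)).

Definition admissible1 (F : finFieldType) s (psi : nat -> nat -> F)
  (lam : 'I_s -> nat -> F -> nat) : Prop :=
  admissible2 psi lam /\ exists R, forall r, (R <= r)%N -> psi r 0%N = 0.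

(* Main.v *)
Require Import Defs.
From mathcomp Require Import all_boot all_order all_algebra.
From mathcomp Require Import zify ring lra.
Import Order.TTheory GRing.Theory Num.Theory.
Set Implicit Arguments. Unset Strict Implicit. Unset Printing Implicit Defensive.

Fixpoint hor (q : nat) (e : nat -> nat) (d : nat) : nat :=
  match d with 0 => 0 | d'.+1 => hor q e d' * q + e d' end.

Lemma eq_hor q e e' d : (forall j, j < d -> e j = e' j) -> hor q e d = hor q e' d.
Proof.
elim: d => [|d IH] H //=; rewrite IH ?H // => j Hj; apply: H; lia.
Qed.

Lemma hor_lt q e d : 0 < q -> (forall j, j < d -> e j < q) -> hor q e d < q ^ d.
Proof.
move=> q0; elim: d => [|d IH] H //=; rewrite expnS.
have h1 := IH (fun j Hj => H j (leqW Hj)). have h2 := H d (ltnSn d). nia.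
Qed.

Lemma hor_split q e d k :
  hor q e (d + k) = hor q e d * q ^ k + hor q (fun j => e (d + j)) k.
Proof.
elim: k => [|k IH] /=; first by rewrite addn0 expn0 muln1 addn0.
rewrite addnS /= IH expnS; ring.
Qed.

Lemma hor_inj q e e' d : (forall j, j < d -> e j < q) -> (forall j, j < d -> e' j < q) ->
  hor q e d = hor q e' d -> forall j, j < d -> e j = e' j.
Proof.
elim: d => [|d IH] H H' //= Heq j Hj.
have q0 : 0 < q by have := H d (ltnSn d); lia.
have E1 : (hor q e d * q + e d) %/ q = (hor q e' d * q + e' d) %/ q by rewrite Heq.
rewrite !divnMDl // !divn_small ?H ?H' // !addn0 in E1.
rewrite E1 in Heq.
have E2 : e d = e' d by move/eqP: Heq; rewrite eqn_add2l => /eqP.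
rewrite ltnS leq_eqVlt in Hj; case/orP: Hj => [/eqP -> //|Hj].
apply: IH => // [i Hi|i Hi]; [apply: H|apply: H']; lia.
Qed.

Lemma hor_surj q d a : 0 < q -> a < q ^ d ->
  {e : nat -> nat | (forall j, j < d -> e j < q) /\ hor q e d = a}.
Proof.
move=> q0; elim: d a => [|d IH] a Ha.
  by exists (fun _ => 0); split => //; move: Ha; rewrite expn0; case: a.
have Ha' : a %/ q < q ^ d by rewrite ltn_divLR // -expnSr.
case: (IH _ Ha') => e [He1 He2].
exists (fun j => if j == d then a %% q else e j); split.
  move=> j Hj; case: eqP => Hjd; [by rewrite ltn_mod| apply: He1; lia].
simpl; rewrite eqxx (@eq_hor _ _ e) ?He2; first by rewrite -divn_eq.
by move=> j Hj; rewrite ifN // neq_ltn Hj.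
Qed.

Definition ndig (q N r : nat) : nat := (N %/ q ^ r) %% q.

Lemma modexp_div q N r : 0 < q -> (N %% q ^ r.+1) %/ q ^ r = ndig q N r.
Proof.
move=> q0; rewrite divn_modl; last by rewrite expnS dvdn_mull.
by rewrite expnS mulnK // expn_gt0 q0.
Qed.

Lemma qdigit_nat q N r : 0 < q -> qdigit q N%:Z r = ndig q N r.
Proof.
move=> q0; rewrite /qdigit modz_nat divz_nat absz_nat; exact: modexp_div.
Qed.

Lemma compl_div q Q x : 0 < Q -> x < q * Q -> (q * Q - 1 - x) %/ Q = q - 1 - x %/ Q.
Proof.
move=> Q0 hx.
have hv := ltn_pmod x Q0.
have hu : x %/ Q < q by rewrite ltn_divLR.
have E : q * Q - 1 - x = (q - 1 - x %/ Q) * Q + (Q - 1 - x %% Q).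
  rewrite {1}(divn_eq x Q); set u := x %/ Q in hu *; set v := x %% Q in hv *.
  rewrite {1}(_ : q = u + (q - 1 - u) + 1); last by lia.
  set w := q - 1 - u.
  rewrite !mulnDl mul1n; clearbody w u v; lia.
by rewrite E divnMDl // (@divn_small (Q - 1 - x %% Q)) ?addn0 //; lia.
Qed.

Lemma qdigit_neg q N r : 0 < q -> qdigit q (- N%:Z - 1)%R r = q - 1 - ndig q N r.
Proof.
move=> q0.
have -> : (- N%:Z - 1)%R = Negz N by rewrite NegzE -addn1 PoszD opprD.
have Qp : 0 < q ^ r.+1 by rewrite expn_gt0 q0.
rewrite /qdigit modNz_nat //.
have hx := ltn_pmod N Qp.
have -> : (Posz (q ^ r.+1) - 1 - Posz (N %% q ^ r.+1))%R = Posz (q ^ r.+1 - 1 - N %% q ^ r.+1).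
  lia.
rewrite divz_nat absz_nat expnS compl_div ?expn_gt0 ?q0 -?expnS //.
by rewrite modexp_div.
Qed.

Lemma ndig_lt q N r : 0 < q -> ndig q N r < q.
Proof. by move=> q0; rewrite /ndig ltn_pmod. Qed.

Lemma ndig_lo q k m n r : 0 < q -> r < m -> ndig q (k * q ^ m + n) r = ndig q n r.
Proof.
move=> q0 hr; rewrite /ndig.
have -> : k * q ^ m = (k * q ^ (m - r).-1 * q) * q ^ r.
  rewrite -!mulnA -expnS -expnD; congr (_ * q ^ _); lia.
by rewrite divnMDl ?expn_gt0 ?q0 // modnMDl.
Qed.

Lemma ndig_hi q k m n r : 0 < q -> n < q ^ m -> m <= r ->
  ndig q (k * q ^ m + n) r = ndig q (k * q ^ m) r.
Proof.
move=> q0 hn hr; rewrite /ndig.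
have -> : q ^ r = q ^ m * q ^ (r - m) by rewrite -expnD subnKC.
have qm : 0 < q ^ m by rewrite expn_gt0 q0.
by rewrite !divnMA divnMDl // (divn_small hn) addn0 mulnK.
Qed.

Lemma ndig_inj q m n n' : 0 < q -> n < q ^ m -> n' < q ^ m ->
  (forall r, r < m -> ndig q n r = ndig q n' r) -> n = n'.
Proof.
move=> q0; elim: m n n' => [|m IH] n n' hn hn' H.
  by rewrite expn0 in hn hn'; lia.
have S : forall x r, ndig q x r.+1 = ndig q (x %/ q) r.
  by move=> x r; rewrite /ndig expnS divnMA.
have h0 : n %% q = n' %% q by have := H 0 isT; rewrite /ndig expn0 !divn1.
have h1 : n %/ q = n' %/ q.
  apply: IH; try by rewrite ltn_divLR // -expnSr.
  by move=> r hr; rewrite -!S; apply: H.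
by rewrite (divn_eq n q) (divn_eq n' q) h0 h1.
Qed.

Local Open Scope ring_scope.

Lemma sum_hor (q m : nat) (g : nat -> nat) : (0 < q)%N ->
 \sum_(1 <= j < m.+1) ((g j)%:R / (q ^ j)%:R : rat) =
   (hor q (fun j => g j.+1) m)%:R / (q ^ m)%:R.
Proof.
move=> q0; elim: m => [|m IH]; first by rewrite big_geq // mul0r.
rewrite big_nat_recr //= IH natrD natrM expnSr natrM.
have h1 : (q%:R : rat) != 0 by rewrite pnatr_eq0 -lt0n.
have h2 : ((q ^ m)%:R : rat) != 0 by rewrite pnatr_eq0 -lt0n expn_gt0 q0.
by field; rewrite h1 h2.
Qed.

Lemma nat_frac_le (Q x y : nat) : (0 < Q)%N ->
  ((x%:R / Q%:R : rat) <= y%:R / Q%:R) = (x <= y)%N.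
Proof. by move=> Q0; rewrite ler_pM2r ?invr_gt0 ?ltr0n // ler_nat. Qed.

Lemma nat_frac_lt (Q x y : nat) : (0 < Q)%N ->
  ((x%:R / Q%:R : rat) < y%:R / Q%:R) = (x < y)%N.
Proof. by move=> Q0; rewrite ltr_pM2r ?invr_gt0 ?ltr0n // ltr_nat. Qed.

Lemma cond_hor q m d a (g : nat -> nat) : (0 < q)%N ->
  (forall j, (0 < j <= m)%N -> (g j < q)%N) -> (d <= m)%N ->
  ((a%:R / (q ^ d)%:R <= \sum_(1 <= j < m.+1) ((g j)%:R / (q ^ j)%:R : rat)) &&
   (\sum_(1 <= j < m.+1) ((g j)%:R / (q ^ j)%:R : rat) < a.+1%:R / (q ^ d)%:R))
  = (hor q (fun j => g j.+1) d == a).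
Proof.
move=> q0 Hg Hd; rewrite sum_hor //.
set e := (fun j => g j.+1).
have Hm : m = (d + (m - d))%N by lia.
have hs := hor_split q e d (m - d). rewrite -Hm in hs.
set R := hor q _ (m - d) in hs.
have HR : (R < q ^ (m - d))%N.
  apply: hor_lt => // j Hj; apply: Hg; lia.
have Qp : (0 < q ^ (m - d))%N by rewrite expn_gt0 q0.
have E : forall b : nat, (b%:R / (q ^ d)%:R : rat) = (b * q ^ (m - d))%:R / (q ^ m)%:R.
  move=> b; rewrite {2}Hm expnD !natrM.
  have h1 : ((q ^ d)%:R : rat) != 0 by rewrite pnatr_eq0 -lt0n expn_gt0 q0.
  have h2 : ((q ^ (m - d))%:R : rat) != 0 by rewrite pnatr_eq0 -lt0n.
  by field; rewrite h1 h2.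
have Qm : (0 < q ^ m)%N by rewrite expn_gt0 q0.
rewrite !E nat_frac_le // nat_frac_lt // hs.
set h := hor q e d. set Q := (q ^ (m - d))%N in HR Qp *.
apply/idP/eqP.
  case/andP => H1 H2.
  have L1 : (a < h.+1)%N by rewrite -(ltn_pmul2r Qp); lia.
  have L2 : (h < a.+1)%N by rewrite -(ltn_pmul2r Qp); lia.
  lia.
move=> ->; apply/andP; split; lia.
Qed.

Lemma pt_bounds q m (g : nat -> nat) : (0 < q)%N ->
  (forall j, (0 < j <= m)%N -> (g j < q)%N) ->
  0 <= \sum_(1 <= j < m.+1) ((g j)%:R / (q ^ j)%:R : rat) < 1.
Proof.
move=> q0 Hg; rewrite sum_hor //.
have Qm : (0 < q ^ m)%N by rewrite expn_gt0 q0.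
rewrite divr_ge0 ?ler0n //= ltr_pdivrMr ?ltr0n // mul1r ltr_nat.
apply: hor_lt => // j Hj; apply: Hg; lia.
Qed.

Section Main.
Context (F : finFieldType) (s : nat) (C : gen_mats F s).
Local Notation q := #|F|.

Lemma q_gt0 : (0 < q)%N.
Proof. exact: ltnW (card_finNzRing_gt1 F). Qed.

Definition Gm m (b : 'rV[F]_m) (i : 'I_s) (j : nat) : F :=
  \sum_(r < m) (C i j)`_r * b 0 r.
Definition beta m (psi : nat -> nat -> F) (n : nat) : 'rV[F]_m :=
  \row_(r < m) psi r (ndig q n r).
Definition chi m (psi : nat -> nat -> F) k (i : 'I_s) (j : nat) : F :=
  \sum_(r < size (C i j)) (if (r < m)%N then 0 else (C i j)`_r * psi r (ndig q (k * q ^ m) r)).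

Lemma sum_trunc S m (f : nat -> F) : (forall r, (S <= r)%N -> f r = 0) ->
  \sum_(r < S) (if (r < m)%N then f r else 0) = \sum_(r < m) f r.
Proof.
move=> hf.
rewrite (big_ord_widen (S + m) (fun r => if (r < m)%N then f r else 0)) ?leq_addr //.
rewrite (big_ord_widen (S + m) f) ?leq_addl // !big_mkcond /=.
rewrite [in RHS]big_mkcond; apply: eq_bigr => r _; case: ifP => hS //; case: ifP => // _; rewrite hf //; lia.
Qed.

Lemma ad_split m (psi : nat -> nat -> F) (k n : nat) (i : 'I_s) (j : nat) : (n < q ^ m)%N ->
  \sum_(r < size (C i j)) (C i j)`_r * psi r (ndig q (k * q ^ m + n) r) =
  Gm (beta m psi n) i j + chi m psi k i j.
Proof.
move=> hn; rewrite /Gm.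
under [X in X + _]eq_bigr do rewrite mxE.
rewrite -(@sum_trunc (size (C i j)) m (fun r => (C i j)`_r * psi r (ndig q n r))); last by move=> r hr; rewrite nth_default ?mul0r.
rewrite -big_split; apply: eq_bigr => r _ /=.
case: ifP => hr.
  by rewrite ndig_lo ?q_gt0 // addr0.
by rewrite add0r ndig_hi ?q_gt0 // leqNgt hr.
Qed.

Lemma alg1_split m (psi : nat -> nat -> F) (n : nat) i j : (n < q ^ m)%N ->
  alg_digit C psi (0 * q ^ m + n)%N%:Z i j = Gm (beta m psi n) i j + chi m psi 0 i j.
Proof.
move=> hn; rewrite -ad_split //; apply: eq_bigr => r _.
by rewrite qdigit_nat ?q_gt0.
Qed.

Definition psic (psi : nat -> nat -> F) := fun r x => psi r (q - 1 - x)%N.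

Lemma alg2_split m (psi : nat -> nat -> F) (k n : nat) i j : (n < q ^ m)%N ->
  alg_digit C psi (- (k * q ^ m + n)%N%:Z - 1) i j =
    Gm (beta m (psic psi) n) i j + chi m (psic psi) k i j.
Proof.
move=> hn; rewrite -ad_split //; apply: eq_bigr => r _.
by rewrite qdigit_neg ?q_gt0.
Qed.

Definition psi_ok (psi : nat -> nat -> F) :=
  forall r a b, (a < q)%N -> (b < q)%N -> psi r a = psi r b -> a = b.

Lemma psic_ok (psi : nat -> nat -> F) : psi_ok psi -> psi_ok (psic psi).
Proof.
move=> H r a b ha hb /H; rewrite /psic => h.
have := h ltac:(lia) ltac:(lia); lia.
Qed.

Lemma beta_inj m (psi : nat -> nat -> F) : psi_ok psi ->
  injective (fun n : 'I_(q ^ m) => beta m psi n).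
Proof.
move=> H n n' /= E; apply: val_inj; apply: (@ndig_inj q m); rewrite ?q_gt0 ?ltn_ord //.
move=> r hr; have := congr1 (fun b : 'rV[F]_m => b 0 (Ordinal hr)) E.
rewrite /beta !mxE /=; apply: H; exact: ndig_lt q_gt0.
Qed.

Lemma count_bij m (h : 'I_(q ^ m) -> 'rV[F]_m) (Q : pred 'rV[F]_m) :
  injective h -> #|[set n | Q (h n)]| = #|[set b | Q b]|.
Proof.
move=> hi.
have hb : bijective h.
  apply: inj_card_bij => //; by rewrite card_mx card_ord mul1n.
case: hb => g hg1 hg2.
rewrite -(card_imset _ hi); apply: eq_card => b; rewrite [RHS]inE.
apply/imsetP/idP => [[n]|Qb]; first by rewrite inE => Qn ->.
by exists (g b); rewrite ?inE hg2.
Qed.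

Definition Qp (lam : 'I_s -> nat -> F -> nat) (d a : 'I_s -> nat) (Y : 'I_s -> nat -> F) :=
  [forall i, hor q (fun j => lam i j.+1 (Y i j.+1)) (d i) == a i].

Definition lam_ok (lam : 'I_s -> nat -> F -> nat) :=
  forall i j, (1 <= j)%N -> bij_FD (lam i j).

Lemma count_block (psi psi' : nat -> nat -> F) lam (z : nat -> int) k m d a c :
  lam_ok lam -> psi_ok psi' -> (forall i, (d i <= m)%N) ->
  (forall n, (n < q ^ m)%N -> forall i j,
      alg_digit C psi (z (k * q ^ m + n)%N) i j = Gm (beta m psi' n) i j + c i j) ->
  #|[set n : 'I_(q ^ m) | [forall i : 'I_s,
          ((a i)%:R / (q ^ d i)%:R <= alg_point_trunc C psi lam z m (k * q ^ m + n)%N i) &&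
          (alg_point_trunc C psi lam z m (k * q ^ m + n)%N i < (a i).+1%:R / (q ^ d i)%:R)]]|
  = #|[set b : 'rV[F]_m | Qp lam d a (fun i j => Gm b i j + c i j)]|.
Proof.
move=> hl hp hd hz.
rewrite -(count_bij (fun b => Qp lam d a (fun i j => Gm b i j + c i j)) (@beta_inj m psi' hp)).
apply: eq_card => n; rewrite !inE; apply: eq_forallb => i.
rewrite /alg_point_trunc.
rewrite (eq_bigr (fun j => (lam i j (Gm (beta m psi' n) i j + c i j))%:R / (q ^ j)%:R)); last first.
  by move=> j _; rewrite hz.
rewrite cond_hor ?q_gt0 //.
move=> j /andP [j0 _]; by case: (hl i j j0).
Qed.

Lemma Q_equiv lam d a Y Y0 : lam_ok lam -> Qp lam d a Y0 ->
  Qp lam d a Y = [forall i, [forall j : 'I_(d i), Y i j.+1 == Y0 i j.+1]].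
Proof.
move=> hl /forallP H0; apply: eq_forallb => i.
have {H0} /eqP H0 := H0 i.
have lb : forall (Y' : 'I_s -> nat -> F) j, (j < d i)%N -> (lam i j.+1 (Y' i j.+1) < q)%N.
  by move=> Y' j _; case: (hl i j.+1 isT) => ->.
apply/eqP/forallP => [E j | E].
  have := @hor_inj q (fun j => lam i j.+1 (Y i j.+1)) (fun j => lam i j.+1 (Y0 i j.+1))
    (d i) (lb Y) (lb Y0) (etrans E (esym H0)) j (ltn_ord j).
  by case: (hl i j.+1 isT) => _ [inj _] /inj ->.
rewrite -H0; apply: eq_hor => j hj; by have /eqP -> := E (Ordinal hj).
Qed.

Lemma Y0_exists lam d a : lam_ok lam -> (forall i, (a i < q ^ d i)%N) ->
  exists Y0, Qp lam d a Y0.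
Proof.
move=> hl ha.
have [e He] : exists e : 'I_s -> nat -> nat, forall i,
    (forall j, (j < d i)%N -> (e i j < q)%N) /\ hor q (e i) (d i) = a i.
  exists (fun i => sval (@hor_surj q (d i) (a i) q_gt0 (ha i))).
  by move=> i; case: (@hor_surj q (d i) (a i) q_gt0 (ha i)).
exists (fun i j => odflt 0 [pick y | lam i j y == e i j.-1]).
apply/forallP => i; apply/eqP; rewrite -(proj2 (He i)); apply: eq_hor => j hj /=.
case: pickP => [y /eqP // | none].
case: (hl i j.+1 isT) => _ [_ sur].
have [y hy] := sur _ ((proj1 (He i)) j hj).
by have := none y; rewrite hy eqxx.
Qed.

End Main.

Unset Implicit Arguments.

Theorem proposition1 (F : finFieldType) (s : nat) (C : gen_mats F s)
  (T : nat -> nat) :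
  (1 <= s)%N ->
  (forall m, (T m <= m)%N) ->
  (exists (psi1 : nat -> nat -> F) (lam1 : 'I_s -> nat -> F -> nat),
     admissible1 psi1 lam1 /\
     is_Tseq #|F| s T (alg_point_trunc C psi1 lam1 (fun n : nat => n%:Z))) ->
  forall (psi : nat -> nat -> F) (lam : 'I_s -> nat -> F -> nat),
    admissible2 psi lam ->
    is_Tseq #|F| s T (alg_point_trunc C psi lam (fun n : nat => - (n%:Z) - 1)).
Proof.
move=> _ _ [psi1 [lam1 [[[hpsi1 hlam1] _] H1]]] psi lam [hpsi hlam] k m hTm.
have q0 := q_gt0 F.
have ok1 : psi_ok psi1 := fun r => (hpsi1 r).1.
have okc : psi_ok (psic psi) := psic_ok (fun r => (hpsi r).1).
split; first exact: ltnW.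
split.
  move=> n i; rewrite /alg_point_trunc; apply: pt_bounds q0 _ => j /andP [j0 _].
  by case: (hlam i j j0).
move=> d a hd ha.
have dm : forall i, (d i <= m)%N.
  move=> i; apply: leq_trans (leq_subr (T m) m); rewrite -hd (bigD1 i) //= leq_addr //.
rewrite (count_block (psi' := psic psi) (c := chi C m (psic psi) k) (d := d) (k := k) a hlam okc dm); last first.
  move=> n hn i j; exact: alg2_split.
have [Y0 HY0] := Y0_exists hlam ha.
set c1 := chi C m psi1 0; set c2 := chi C m (psic psi) k.
pose Y1 := fun i j => Y0 i j - c2 i j + c1 i j.
pose a' := fun i => hor #|F| (fun j => lam1 i j.+1 (Y1 i j.+1)) (d i).
have ha' : forall i, (a' i < #|F| ^ d i)%N.
  by move=> i; apply: hor_lt q0 _ => j _; case: (hlam1 i j.+1 isT).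
have [_ [_ Hc]] := H1 0%N m hTm.
have := Hc d a' hd ha'.
rewrite (count_block (psi' := psi1) (c := c1) (k := 0%N) a' hlam1 ok1 dm); last first.
  move=> n hn i j; exact: alg1_split.
move=> <-; apply: eq_card => b; rewrite !inE.
rewrite (Q_equiv _ hlam HY0) (@Q_equiv _ _ lam1 d a' _ Y1 hlam1); last by apply/forallP => i.
apply: eq_forallb => i; apply: eq_forallb => j.
apply/eqP/eqP => h; first by rewrite /Y1 -h addrK.
move/(congr1 (fun x => x - c1 i j.+1)): h; rewrite /Y1 !addrK => ->.
by rewrite subrK.
Qed.
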